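(* Let $0<\nu<1$, let $\chi$ be a kernel with $M_\nu(\chi)<\infty$, and let $f\in\mathcal{C}(\mathbb{R}^+)$. Then for all sufficiently large $w>0$ and every $t\in\mathbb{R}^+$, $$|(S_w^\chi f)(t)-f(t)|\le \omega(f,w^{-\nu})\,[M_\nu(\chi)+2M_0(\chi)]+2^{\nu+1}\|f\|_\infty M_\nu(\chi)\,w^{-\nu}.$$
   Context: Let $\mathbb{R}^+=(0,\infty)$. For $\chi:\mathbb{R}^+\to\mathbb{R}$ and $\nu\ge 0$ set $M_\nu(\chi):=\sup_{u>0}\sum_{k\in\mathbb{Z}}|\chi(e^{-k}u)|\,|k-\log u|^\nu$ (with $|k-\log u|^0:=1$). A kernel is a function $\chi:\mathbb{R}^+\to\mathbb{R}$ such that (K1) $\sum_{k\in\mathbb{Z}}\chi(e^{-k}u)=1$ for every $u\in\mathbb{R}^+$, and (K2) $M_0(\chi)<\infty$ and $M_\nu(\chi)<\infty$ for some $\nu>0$. For a bounded $f:\mathbb{R}^+\to\mathbb{R}$, $w>0$ and $t\in\mathbb{R}^+$, the exponential sampling series is $(S_w^\chi f)(t)=\sum_{k\in\mathbb{Z}}\chi(e^{-k}t^w)\,f(e^{k/w})$. $\|f\|_\infty=\sup_{x>0}|f(x)|$. $\mathcal{C}(\mathbb{R}^+)$ is the space of bounded functions $f:\mathbb{R}^+\to\mathbb{R}$ that are log-uniformly continuous: for every $\epsilon>0$ there is $\delta>0$ with $|f(p)-f(q)|<\epsilon$ whenever $|\log p-\log q|<\delta$. The logarithmic modulus of continuity is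 $\omega(f,\delta):=\sup\{|f(p)-f(q)|: p,q\in\mathbb{R}^+,\ |\log p-\log q|\le\delta\}$ for $\delta>0$. *)

(* Defs.v *)
From Stdlib Require Import Reals Lra ZArith.
From Coquelicot Require Import Coquelicot.
Open Scope R_scope.

(* |x|^nu for x >= 0, with the convention |x|^0 := 1 (and 0^nu = 0 for nu > 0). *)
Definition pw (x nu : R) : R :=
  if Req_EM_T nu 0 then 1 else if Rlt_dec 0 x then Rpower x nu else 0.

(* symmetric partial sum  sum_{k=-N}^{N} a k *)
Definition sumZ_partial (a : Z -> R) (N : nat) : R :=
  sum_n (fun n : nat => a (Z.of_nat n - Z.of_nat N)%Z) (2 * N)%nat.

Definition sumZ (a : Z -> R) : Rbar := Lim_seq (sumZ_partial a).

Definition M_nu (chi : R -> R) (nu : R) : Rbar :=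
  Rbar_lub (fun x : Rbar => exists u : R, 0 < u /\
     x = sumZ (fun k => Rabs (chi (exp (- IZR k) * u)) * pw (Rabs (IZR k - ln u)) nu)).

Definition is_kernel (chi : R -> R) : Prop :=
  (forall u : R, 0 < u -> is_lim_seq (sumZ_partial (fun k => chi (exp (- IZR k) * u))) 1)
  /\ is_finite (M_nu chi 0)
  /\ (exists nu : R, 0 < nu /\ is_finite (M_nu chi nu)).

Definition S_w (chi : R -> R) (w : R) (f : R -> R) (t : R) : R :=
  real (Lim_seq (sumZ_partial
    (fun k => chi (exp (- IZR k) * Rpower t w) * f (exp (IZR k / w))))).

Definition bounded_pos (f : R -> R) : Prop :=
  exists B : R, forall x : R, 0 < x -> Rabs (f x) <= B.

Definition sup_norm (f : R -> R) : R :=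
  real (Lub_Rbar (fun y => exists x : R, 0 < x /\ y = Rabs (f x))).

Definition in_C (f : R -> R) : Prop :=
  bounded_pos f /\
  (forall eps : R, 0 < eps -> exists delta : R, 0 < delta /\
     forall p q : R, 0 < p -> 0 < q -> Rabs (ln p - ln q) < delta ->
       Rabs (f p - f q) < eps).

Definition omega (f : R -> R) (delta : R) : R :=
  real (Lub_Rbar (fun y => exists p q : R, 0 < p /\ 0 < q /\
          Rabs (ln p - ln q) <= delta /\ y = Rabs (f p - f q))).

(* Main.v *)
Require Import Defs.
From Stdlib Require Import Reals Lra Lia ZArith.
From Coquelicot Require Import Coquelicot.
Open Scope R_scope.

Lemma sumZ_partial_R (a : Z -> R) N :
  sumZ_partial a N = sum_f_R0 (fun n => a (Z.of_nat n - Z.of_nat N)%Z) (2 * N).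
Proof. unfold sumZ_partial. apply sum_n_Reals. Qed.

Lemma sumZ_partial_S (a : Z -> R) N : exists i j,
  sumZ_partial a (S N) = sumZ_partial a N + a i + a j.
Proof.
  rewrite !sumZ_partial_R.
  replace (2 * S N)%nat with (S (S (2 * N))) by lia.
  rewrite decomp_sum by lia. change (pred (S (S (2 * N)))) with (S (2 * N)).
  exists (Z.of_nat 0 - Z.of_nat (S N))%Z, (Z.of_nat (S (2*N)) - Z.of_nat N)%Z.
  rewrite tech5.
  rewrite (sum_eq (fun i => a (Z.of_nat (S i) - Z.of_nat (S N))%Z)
     (fun n => a (Z.of_nat n - Z.of_nat N)%Z)).
  2:{ intros i _. f_equal. lia. }
  replace (Z.of_nat (S (S (2 * N))) - Z.of_nat (S N))%Z with
     (Z.of_nat (S (2 * N)) - Z.of_nat N)%Z by lia.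
  cbv beta. ring.
Qed.

Lemma sumZ_partial_mono (a : Z -> R) : (forall k, 0 <= a k) ->
  forall N m, sumZ_partial a N <= sumZ_partial a (m + N).
Proof.
  intros Ha N m. induction m. simpl; lra.
  simpl. destruct (sumZ_partial_S a (m + N)) as [i [j E]]. rewrite E.
  pose proof (Ha i). pose proof (Ha j). lra.
Qed.

Lemma sumZ_partial_ge0 (a : Z -> R) : (forall k, 0 <= a k) -> forall N, 0 <= sumZ_partial a N.
Proof.
  intros Ha N. rewrite sumZ_partial_R. apply cond_pos_sum. intros; apply Ha.
Qed.

Lemma pw_ge0 x nu : 0 <= pw x nu.
Proof.
  unfold pw. destruct (Req_EM_T nu 0). lra. destruct (Rlt_dec 0 x).
  unfold Rpower. left; apply exp_pos. lra.
Qed.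

Lemma partial_le_M chi nu u N : 0 < u -> is_finite (M_nu chi nu) ->
  sumZ_partial (fun k => Rabs (chi (exp (- IZR k) * u)) * pw (Rabs (IZR k - ln u)) nu) N
  <= real (M_nu chi nu).
Proof.
  intros Hu Hf.
  set (a := fun k => Rabs (chi (exp (- IZR k) * u)) * pw (Rabs (IZR k - ln u)) nu).
  assert (Ha : forall k, 0 <= a k).
  { intros k. unfold a. apply Rmult_le_pos. apply Rabs_pos. apply pw_ge0. }
  assert (H1 : Rbar_le (Finite (sumZ_partial a N)) (sumZ a)).
  { unfold sumZ. rewrite <- (Lim_seq_const (sumZ_partial a N)).
    apply Lim_seq_le_loc. exists N. intros n Hn.
    replace n with ((n - N) + N)%nat by lia. apply sumZ_partial_mono; auto. }
  assert (H2 : Rbar_le (sumZ a) (M_nu chi nu)).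
  { unfold M_nu, Rbar_lub.
    match goal with |- context [proj1_sig ?X] => destruct (proj2_sig X) as [Hl _] end.
    apply Hl. exists u. split; auto. }
  unfold is_finite in Hf. rewrite <- Hf in H2.
  destruct (sumZ a); simpl in *; try contradiction; lra.
Qed.

Lemma real_lub_ub (E : R -> Prop) B y : (forall x, E x -> x <= B) -> E y ->
  y <= real (Lub_Rbar E).
Proof.
  intros HB Hy. destruct (Lub_Rbar_correct E) as [Hub Hl].
  specialize (Hub y Hy). specialize (Hl (Finite B) HB).
  destruct (Lub_Rbar E); simpl in *; try contradiction; lra.
Qed.

Lemma sup_ub f x : bounded_pos f -> 0 < x -> Rabs (f x) <= sup_norm f.
Proof.
  intros [B HB] Hx. unfold sup_norm. apply (real_lub_ub _ B).
  intros y [z [Hz ->]]. auto. exists x; auto.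
Qed.

Lemma sup_ge0 f : bounded_pos f -> 0 <= sup_norm f.
Proof. intros Hb. pose proof (sup_ub f 1 Hb Rlt_0_1). pose proof (Rabs_pos (f 1)). lra. Qed.

Lemma om_ub f d p q : bounded_pos f -> 0 < p -> 0 < q -> Rabs (ln p - ln q) <= d ->
  Rabs (f p - f q) <= omega f d.
Proof.
  intros [B HB] Hp Hq Hd. unfold omega. apply (real_lub_ub _ (2 * B)).
  - intros y [p' [q' [Hp' [Hq' [_ ->]]]]].
    pose proof (HB p' Hp'). pose proof (HB q' Hq').
    pose proof (Rabs_triang (f p') (- f q')). rewrite Rabs_Ropp in H1. unfold Rminus. lra.
  - exists p, q. repeat split; auto.
Qed.

Lemma om_ge0 f d : bounded_pos f -> 0 <= d -> 0 <= omega f d.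
Proof.
  intros Hb Hd. pose proof (om_ub f d 1 1 Hb Rlt_0_1 Rlt_0_1).
  replace (ln 1 - ln 1) with 0 in H by ring. rewrite Rabs_R0 in H.
  replace (f 1 - f 1) with 0 in H by ring. rewrite Rabs_R0 in H. auto.
Qed.

Lemma om_nat f d : bounded_pos f -> 0 <= d -> forall n : nat, forall x y,
  Rabs (x - y) <= INR n * d -> Rabs (f (exp x) - f (exp y)) <= INR n * omega f d.
Proof.
  intros Hb Hd n. induction n; intros x y Hxy.
  - simpl in *. rewrite Rmult_0_l in Hxy |- *.
    assert (x = y). { pose proof (Rabs_pos (x - y)). assert (Rabs (x-y) = 0) by lra.
      apply Rabs_eq_0 in H0. lra. }
    subst. replace (f (exp y) - f (exp y)) with 0 by ring. rewrite Rabs_R0; lra.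
  - rewrite S_INR in *. pose proof (pos_INR n) as Hn.
    set (z := x + (y - x) / (INR n + 1)).
    assert (H1 : Rabs (x - z) <= d).
    { replace (x - z) with ((x - y) * / (INR n + 1)) by (unfold z; field; lra).
      rewrite Rabs_mult, (Rabs_pos_eq (/ _)) by (left; apply Rinv_0_lt_compat; lra).
      apply (Rmult_le_reg_r (INR n + 1)). lra.
      rewrite Rmult_assoc, Rinv_l by lra. lra. }
    assert (H2 : Rabs (z - y) <= INR n * d).
    { replace (z - y) with ((x - y) * (INR n / (INR n + 1))) by (unfold z; field; lra).
      rewrite Rabs_mult, (Rabs_pos_eq (_ / _)).
      2:{ apply Rmult_le_pos; auto. left; apply Rinv_0_lt_compat; lra. }
      apply (Rmult_le_reg_r (INR n + 1)). lra.
      replace (Rabs (x - y) * (INR n / (INR n + 1)) * (INR n + 1)) with (Rabs (x - y) * INR n)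
        by (field; lra).
      replace (INR n * d * (INR n + 1)) with ((INR n + 1) * d * INR n) by ring.
      apply Rmult_le_compat_r; auto. }
    pose proof (IHn z y H2).
    assert (Rabs (f (exp x) - f (exp z)) <= omega f d).
    { apply om_ub; auto; try apply exp_pos. rewrite !ln_exp. auto. }
    pose proof (Rabs_triang (f (exp x) - f (exp z)) (f (exp z) - f (exp y))) as T.
    replace (f (exp x) - f (exp z) + (f (exp z) - f (exp y))) with (f (exp x) - f (exp y)) in T by ring.
    lra.
Qed.

Lemma om_lam f d lam p q : bounded_pos f -> 0 < d -> 0 <= lam -> 0 < p -> 0 < q ->
  Rabs (ln p - ln q) <= lam * d -> Rabs (f p - f q) <= (1 + lam) * omega f d.
Proof.
  intros Hb Hd Hl Hp Hq H.
  destruct (archimed lam) as [A1 A2].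
  assert (Hup : (0 <= up lam)%Z). { apply le_IZR. lra. }
  pose proof (om_nat f d Hb (Rlt_le _ _ Hd) (Z.to_nat (up lam)) (ln p) (ln q)) as K.
  rewrite INR_IZR_INZ, Z2Nat.id in K by auto.
  rewrite !exp_ln in K by auto.
  pose proof (om_ge0 f d Hb (Rlt_le _ _ Hd)).
  assert (Rabs (f p - f q) <= IZR (up lam) * omega f d).
  { apply K. apply Rle_trans with (lam * d); auto. apply Rmult_le_compat_r; lra. }
  apply Rle_trans with (IZR (up lam) * omega f d); auto.
  apply Rmult_le_compat_r; lra.
Qed.


Lemma exp_le' a b : a <= b -> exp a <= exp b.
Proof. intros [H|H]. left; apply exp_increasing; auto. subst; lra. Qed.

Lemma pointwise f nu w t k : bounded_pos f -> 0 < nu < 1 -> 0 < w -> 0 < t ->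
  Rabs (f (exp (IZR k / w)) - f t) <=
  omega f (Rpower w (- nu)) * (pw (Rabs (IZR k - ln (Rpower t w))) 0
                               + pw (Rabs (IZR k - ln (Rpower t w))) nu)
  + 2 * sup_norm f * Rpower w (- nu) * pw (Rabs (IZR k - ln (Rpower t w))) nu.
Proof.
  intros Hb Hnu Hw Ht.
  assert (Hl : ln (Rpower t w) = w * ln t) by (unfold Rpower; apply ln_exp).
  rewrite Hl. set (x := Rabs (IZR k - w * ln t)).
  assert (Hx0 : 0 <= x) by apply Rabs_pos.
  assert (Hd : Rabs (ln (exp (IZR k / w)) - ln t) = x / w).
  { rewrite ln_exp. replace (IZR k / w - ln t) with ((IZR k - w * ln t) * / w) by (field; lra).
    rewrite Rabs_mult, (Rabs_pos_eq (/ w)) by (left; apply Rinv_0_lt_compat; lra). reflexivity. }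
  assert (Hp0 : pw x 0 = 1).
  { unfold pw. destruct (Req_EM_T 0 0); [auto | lra]. }
  rewrite Hp0.
  set (d := Rpower w (- nu)).
  assert (Hdpos : 0 < d) by (unfold d, Rpower; apply exp_pos).
  pose proof (om_ge0 f d Hb (Rlt_le _ _ Hdpos)) as Hom.
  pose proof (sup_ge0 f Hb) as HS.
  pose proof (pw_ge0 x nu) as Hpw.
  destruct (Rlt_or_le x w) as [Hxw | Hxw].
  - set (lam := x / w / d).
    assert (Hlam0 : 0 <= lam) by (unfold lam; apply Rmult_le_pos;
      [apply Rmult_le_pos; [lra | left; apply Rinv_0_lt_compat; lra] | left; apply Rinv_0_lt_compat; lra]).
    assert (K : Rabs (f (exp (IZR k / w)) - f t) <= (1 + lam) * omega f d).
    { apply om_lam; auto. apply exp_pos. rewrite Hd. unfold lam. right; field; lra. }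
    assert (Hlp : lam <= pw x nu).
    { unfold pw. destruct (Req_EM_T nu 0); [lra|]. destruct (Rlt_dec 0 x) as [Hx|Hx].
      - unfold lam, d, Rpower.
        rewrite <- (exp_ln x) at 1 by auto. rewrite <- (exp_ln w) at 1 by auto.
        replace (exp (ln x) / exp (ln w) / exp (- nu * ln w)) with (exp (ln x - ln w + nu * ln w)).
        2:{ unfold Rminus. rewrite !exp_plus, !exp_Ropp.
            replace (- nu * ln w) with (- (nu * ln w)) by ring. rewrite exp_Ropp.
            field. split; apply Rgt_not_eq, exp_pos. }
        apply exp_le'. pose proof (ln_increasing x w Hx Hxw). nra.
      - assert (x = 0) by lra. unfold lam. rewrite H. unfold Rdiv. rewrite !Rmult_0_l. lra. }
    assert (0 <= 2 * sup_norm f * d * pw x nu) by (repeat apply Rmult_le_pos; lra).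
    apply Rle_trans with ((1 + lam) * omega f d); auto.
    assert ((1 + lam) * omega f d <= (1 + pw x nu) * omega f d) by (apply Rmult_le_compat_r; lra).
    lra.
  - assert (Hx : 0 < x) by lra.
    assert (K : Rabs (f (exp (IZR k / w)) - f t) <= 2 * sup_norm f).
    { pose proof (sup_ub f _ Hb (exp_pos (IZR k / w))). pose proof (sup_ub f t Hb Ht).
      pose proof (Rabs_triang (f (exp (IZR k / w))) (- f t)). rewrite Rabs_Ropp in H1.
      unfold Rminus. lra. }
    assert (H1 : 1 <= d * pw x nu).
    { unfold pw. destruct (Req_EM_T nu 0); [lra|]. destruct (Rlt_dec 0 x) as [_|]; [|lra].
      unfold d, Rpower. rewrite <- exp_plus. rewrite <- exp_0. apply exp_le'.
      assert (ln w <= ln x). { destruct Hxw as [Hxw|Hxw]. left; apply ln_increasing; lra. rewrite Hxw; lra. }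
      nra. }
    assert (0 <= omega f d * (1 + pw x nu)) by (apply Rmult_le_pos; lra).
    assert (H2 : 2 * sup_norm f <= 2 * sup_norm f * (d * pw x nu)).
    { rewrite <- (Rmult_1_r (2 * sup_norm f)) at 1. apply Rmult_le_compat_l; lra. }
    rewrite Rmult_assoc in H2 |- *. lra.
Qed.

Theorem theorem8 (nu : R) (chi f : R -> R) :
  0 < nu < 1 ->
  is_kernel chi ->
  is_finite (M_nu chi nu) ->
  in_C f ->
  exists w0 : R, forall w : R, w0 < w -> 0 < w -> forall t : R, 0 < t ->
    Rabs (S_w chi w f t - f t) <=
      omega f (Rpower w (- nu)) * (real (M_nu chi nu) + 2 * real (M_nu chi 0))
      + Rpower 2 (nu + 1) * sup_norm f * real (M_nu chi nu) * Rpower w (- nu).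
Proof.
  intros Hnu [HK1 [HM0 _]] HMnu [Hb _]. exists 0. intros w _ Hw t Ht.
  assert (Hu : 0 < Rpower t w) by (unfold Rpower; apply exp_pos).
  set (u := Rpower t w) in *.
  set (d := Rpower w (- nu)).
  assert (Hdpos : 0 < d) by (unfold d, Rpower; apply exp_pos).
  pose proof (om_ge0 f d Hb (Rlt_le _ _ Hdpos)) as Hom.
  pose proof (sup_ge0 f Hb) as HS.
  set (om := omega f d) in *. set (S := sup_norm f) in *.
  set (M0 := real (M_nu chi 0)). set (Mn := real (M_nu chi nu)).
  set (c := fun k => chi (exp (- IZR k) * u)).
  set (a0 := fun k => Rabs (chi (exp (- IZR k) * u)) * pw (Rabs (IZR k - ln u)) 0).
  set (an := fun k => Rabs (chi (exp (- IZR k) * u)) * pw (Rabs (IZR k - ln u)) nu).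
  assert (HA0 : forall N, sumZ_partial a0 N <= M0) by (intros; apply partial_le_M; auto).
  assert (HAn : forall N, sumZ_partial an N <= Mn) by (intros; apply partial_le_M; auto).
  assert (HM0pos : 0 <= M0).
  { apply Rle_trans with (sumZ_partial a0 0); auto. apply sumZ_partial_ge0.
    intros; unfold a0; apply Rmult_le_pos; [apply Rabs_pos | apply pw_ge0]. }
  assert (HMnpos : 0 <= Mn).
  { apply Rle_trans with (sumZ_partial an 0); auto. apply sumZ_partial_ge0.
    intros; unfold an; apply Rmult_le_pos; [apply Rabs_pos | apply pw_ge0]. }
  set (C := om * (M0 + Mn) + 2 * S * d * Mn).
  set (A := sumZ_partial (fun k => chi (exp (- IZR k) * u) * f (exp (IZR k / w)))).
  assert (Key : forall N, Rabs (A N - f t * sumZ_partial c N) <= C).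
  { intros N. unfold A. 
    pose proof (HA0 N) as E0. pose proof (HAn N) as En.
    rewrite !sumZ_partial_R in *. rewrite scal_sum, <- minus_sum.
    eapply Rle_trans. apply Rsum_abs.
    eapply Rle_trans. apply sum_Rle with
      (Bn := fun n => a0 (Z.of_nat n - Z.of_nat N)%Z * om + an (Z.of_nat n - Z.of_nat N)%Z * om
                      + an (Z.of_nat n - Z.of_nat N)%Z * (2 * S * d)).
    { intros n _. set (k := (Z.of_nat n - Z.of_nat N)%Z). unfold c, a0, an.
      rewrite <- Rmult_minus_distr_l, Rabs_mult.
      pose proof (pointwise f nu w t k Hb Hnu Hw Ht) as P. fold u d om S in P.
      pose proof (Rabs_pos (chi (exp (- IZR k) * u))).
      apply Rle_trans with (Rabs (chi (exp (- IZR k) * u)) *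
        (om * (pw (Rabs (IZR k - ln u)) 0 + pw (Rabs (IZR k - ln u)) nu) +
         2 * S * d * pw (Rabs (IZR k - ln u)) nu)).
      apply Rmult_le_compat_l; auto. right; ring. }
    rewrite !plus_sum, <- !scal_sum.
    unfold C.
    assert (om * sum_f_R0 (fun n => a0 (Z.of_nat n - Z.of_nat N)%Z) (2 * N) <= om * M0)
      by (apply Rmult_le_compat_l; auto).
    assert (om * sum_f_R0 (fun n => an (Z.of_nat n - Z.of_nat N)%Z) (2 * N) <= om * Mn)
      by (apply Rmult_le_compat_l; auto).
    assert (2 * S * d * sum_f_R0 (fun n => an (Z.of_nat n - Z.of_nat N)%Z) (2 * N) <= 2 * S * d * Mn)
      by (apply Rmult_le_compat_l; [repeat apply Rmult_le_pos|]; lra).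
    lra. }
  assert (HC : C <= om * (Mn + 2 * M0) + Rpower 2 (nu + 1) * S * Mn * d).
  { assert (H2 : 2 <= Rpower 2 (nu + 1)).
    { rewrite Rpower_plus, Rpower_1 by lra.
      assert (1 <= Rpower 2 nu). { unfold Rpower. rewrite <- exp_0. apply exp_le'.
        assert (0 < ln 2) by (rewrite <- ln_1; apply ln_increasing; lra). nra. }
      lra. }
    unfold C.
    assert (0 <= om * M0) by (apply Rmult_le_pos; auto).
    assert (0 <= (Rpower 2 (nu + 1) - 2) * (S * Mn * d))
      by (apply Rmult_le_pos; [lra | repeat apply Rmult_le_pos; lra]).
    nra. }
  pose proof (HK1 u Hu) as Hlim. fold c in Hlim.
  assert (L1 : is_lim_seq (fun N => f t * sumZ_partial c N + C) (f t + C)).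
  { apply is_lim_seq_plus'. pose proof (is_lim_seq_scal_l _ (f t) 1 Hlim) as Q.
    simpl in Q. rewrite Rmult_1_r in Q. exact Q. apply is_lim_seq_const. }
  assert (L2 : is_lim_seq (fun N => f t * sumZ_partial c N + - C) (f t - C)).
  { apply is_lim_seq_plus'. pose proof (is_lim_seq_scal_l _ (f t) 1 Hlim) as Q.
    simpl in Q. rewrite Rmult_1_r in Q. exact Q. apply is_lim_seq_const. }
  assert (U : Rbar_le (Lim_seq A) (f t + C)).
  { rewrite <- (is_lim_seq_unique _ _ L1). apply Lim_seq_le_loc. exists 0%nat.
    intros n _. pose proof (Key n). apply Rabs_le_between in H. lra. }
  assert (D : Rbar_le (f t - C) (Lim_seq A)).
  { rewrite <- (is_lim_seq_unique _ _ L2). apply Lim_seq_le_loc. exists 0%nat.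
    intros n _. pose proof (Key n). apply Rabs_le_between in H. lra. }
  unfold S_w. fold u. fold A.
  apply Rle_trans with C; auto.
  destruct (Lim_seq A); simpl in *; try contradiction.
  apply Rabs_le. lra.
Qed.
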